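(* Let $X$ be a Tychonoff space. Then for every closed discrete set $D\subset X$ we have $|D|\le\chi((C(X),\tau_\Gamma))$, where $|D|$ is the cardinality of $D$ and $\chi$ denotes the character of the space.
   Context: $C(X)$ is the set of continuous real-valued functions on $X$, each identified with its graph in $X\times\mathbb{R}$. The graph topology $\tau_\Gamma$ on $C(X)$ has base $\{F_G: G\text{ open in }X\times\mathbb{R}\}$ where $F_G=\{f\in C(X): f\subset G\}$. The character $\chi$ of a space is the supremum over its points of the minimal cardinality of a neighbourhood base at the point (an infinite cardinal). *)

(* Defs.v *)
From Stdlib Require Import Reals.
Open Scope R_scope.

Definition is_topology {X : Type} (T : (X -> Prop) -> Prop) : Prop :=
  T (fun _ => True) /\
  T (fun _ => False) /\
  (forall U V, T U -> T V -> T (fun x => U x /\ V x)) /\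
  (forall F : (X -> Prop) -> Prop,
      (forall U, F U -> T U) -> T (fun x => exists U, F U /\ U x)).

Definition is_closed {X : Type} (T : (X -> Prop) -> Prop) (A : X -> Prop) : Prop :=
  T (fun x => ~ A x).

Definition R_open (U : R -> Prop) : Prop :=
  forall x, U x -> exists eps, 0 < eps /\ forall y, Rabs (y - x) < eps -> U y.

Definition continuous_real {X : Type} (T : (X -> Prop) -> Prop) (f : X -> R) : Prop :=
  forall V, R_open V -> T (fun x => V (f x)).

Definition T1 {X : Type} (T : (X -> Prop) -> Prop) : Prop :=
  forall x : X, is_closed T (fun y => y = x).

Definition completely_regular {X : Type} (T : (X -> Prop) -> Prop) : Prop :=
  forall (F : X -> Prop) (x : X), is_closed T F -> ~ F x ->
    exists f : X -> R, continuous_real T f /\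
      (forall y, 0 <= f y <= 1) /\ f x = 0 /\ (forall y, F y -> f y = 1).

Definition tychonoff {X : Type} (T : (X -> Prop) -> Prop) : Prop :=
  is_topology T /\ T1 T /\ completely_regular T.

Definition closed_discrete {X : Type} (T : (X -> Prop) -> Prop) (D : X -> Prop) : Prop :=
  is_closed T D /\
  forall x, D x -> exists U, T U /\ U x /\ (forall y, U y -> D y -> y = x).

Definition prod_open {X : Type} (T : (X -> Prop) -> Prop) (G : X * R -> Prop) : Prop :=
  forall x t, G (x, t) ->
    exists U eps, T U /\ U x /\ 0 < eps /\
      forall y s, U y -> Rabs (s - t) < eps -> G (y, s).

Definition CX {X : Type} (T : (X -> Prop) -> Prop) : Type :=
  { f : X -> R | continuous_real T f }.

Definition F_G {X : Type} (T : (X -> Prop) -> Prop) (G : X * R -> Prop)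
  : CX T -> Prop :=
  fun f => forall x, G (x, proj1_sig f x).

Definition graph_open {X : Type} (T : (X -> Prop) -> Prop) (W : CX T -> Prop) : Prop :=
  forall f, W f -> exists G, prod_open T G /\ F_G T G f /\
    (forall g, F_G T G g -> W g).

Definition local_base {Y L : Type} (O : (Y -> Prop) -> Prop) (p : Y)
  (B : L -> Y -> Prop) : Prop :=
  (forall l, O (B l) /\ B l p) /\
  (forall U, O U -> U p -> exists l, forall y, B l y -> U y).

(** "chi(Y) <= |L|": |L| is infinite and every point has a local base of
    cardinality at most |L| (i.e. indexed by L). *)
Definition character_le {Y : Type} (O : (Y -> Prop) -> Prop) (L : Type) : Prop :=
  (exists e : nat -> L, forall m n, e m = e n -> m = n) /\
  (forall p : Y, exists B : L -> Y -> Prop, local_base O p B).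

(* Main.v *)
Require Import Defs.
From Stdlib Require Import Reals Lra ClassicalEpsilon FunctionalExtensionality PropExtensionality ProofIrrelevance Classical.
Open Scope R_scope.

Lemma top_ext {X : Type} (T : (X -> Prop) -> Prop) (U V : X -> Prop) :
  T U -> (forall x, U x <-> V x) -> T V.
Proof.
intros HU H. replace V with U; auto.
apply functional_extensionality; intro x; apply propositional_extensionality; auto.
Qed.

Lemma const_cont {X : Type} (T : (X -> Prop) -> Prop) (c : R) :
  is_topology T -> continuous_real T (fun _ => c).
Proof.
intros [H1 [H2 _]] V _. destruct (classic (V c)) as [Hv|Hv].
- apply (top_ext T (fun _ => True)); auto; tauto.
- apply (top_ext T (fun _ => False)); auto; tauto.
Qed.

Lemma affine_cont {X : Type} (T : (X -> Prop) -> Prop) (phi : X -> R) (c : R) :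
  0 < c -> continuous_real T phi -> continuous_real T (fun x => c * (1 - phi x)).
Proof.
intros Hc Hphi V HV.
apply (Hphi (fun y => V (c * (1 - y)))).
intros y Hy. destruct (HV _ Hy) as [eps [He H]].
exists (eps / c). split. apply Rdiv_lt_0_compat; lra.
intros z Hz. apply H.
replace (c * (1 - z) - c * (1 - y)) with (c * (y - z)) by ring.
rewrite Rabs_mult, Rabs_pos_eq by lra.
rewrite <- Rabs_Ropp in Hz. replace (- (z - y)) with (y - z) in Hz by ring.
apply Rmult_lt_compat_l with (r := c) in Hz; auto.
replace (c * (eps / c)) with eps in Hz by (field; lra). exact Hz.
Qed.

Definition zeroC {X : Type} (T : (X -> Prop) -> Prop) (H : is_topology T) : CX T :=
  exist _ (fun _ => 0) (const_cont T 0 H).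

Lemma graph_bump {X : Type} (T : (X -> Prop) -> Prop) (Ht : tychonoff T)
  (W : CX T -> Prop) : graph_open T W -> W (zeroC T (proj1 Ht)) ->
  forall d, exists f, W f /\ proj1_sig f d <> 0.
Proof.
intros HW H0 d. pose proof Ht as [Htop [_ Hcr]].
destruct (HW _ H0) as [G [HG [HG0 HGW]]].
destruct (HG d 0 (HG0 d)) as [U [eps [HU [Ud [He HUG]]]]].
assert (Hcl : is_closed T (fun x => ~ U x)).
{ unfold is_closed. apply (top_ext T U); auto. intro x; tauto. }
destruct (Hcr _ d Hcl) as [phi [Hphi [Hb [Hd H1]]]]. { tauto. }
assert (Hc : 0 < eps / 2) by lra.
pose (f := exist (continuous_real T) (fun x => eps/2 * (1 - phi x)) (affine_cont T phi _ Hc Hphi) : CX T).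
exists f. split.
- apply HGW. intro x. simpl. destruct (classic (U x)) as [Ux|Ux].
  + apply HUG; auto. rewrite Rminus_0_r. specialize (Hb x).
    rewrite Rabs_pos_eq; [|apply Rmult_le_pos; lra].
    assert (eps / 2 * (1 - phi x) <= eps / 2 * 1) by (apply Rmult_le_compat_l; lra). lra.
  + rewrite H1 by auto. replace (eps / 2 * (1 - 1)) with 0 by ring. apply HG0.
- simpl. rewrite Hd. lra.
Qed.

Lemma W_open {X : Type} (T : (X -> Prop) -> Prop) (D : X -> Prop)
  (HD : closed_discrete T D) (g : X -> R) :
  graph_open T (fun f : CX T => forall x, D x -> Rabs (proj1_sig f x) < g x).
Proof.
destruct HD as [HDcl HDdisc]. intros f Hf.
exists (fun p => D (fst p) -> Rabs (snd p) < g (fst p)). split; [|split].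
- intros x t Gxt. simpl in Gxt. destruct (classic (D x)) as [Dx|Dx].
  + destruct (HDdisc x Dx) as [U [HU [Ux Hiso]]].
    specialize (Gxt Dx).
    exists U, (g x - Rabs t). split; auto. split; auto. split. lra.
    intros y s Uy Hs Dy. simpl. rewrite (Hiso y Uy Dy).
    pose proof (Rabs_triang_inv s t). lra.
  + exists (fun y => ~ D y), 1. split. exact HDcl. split; auto. split. lra.
    intros y s Uy _ Dy. contradiction.
- intros x. simpl. apply Hf.
- intros h Hh x Dx. apply (Hh x Dx).
Qed.

From mathcomp Require Import all_boot boolp classical_sets.
Local Open Scope classical_set_scope.

Lemma maxpinj (A B : Type) : exists Rl : set (A * B),
  (forall a b b', Rl (a,b) -> Rl (a,b') -> b = b') /\
  (forall a a' b, Rl (a,b) -> Rl (a',b) -> a = a') /\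
  (forall a b, (forall b', ~ Rl (a,b')) -> (forall a', ~ Rl (a',b)) -> False).
Proof.
pose P : set (set (A * B)) := fun Rl =>
  (forall a b b', Rl (a,b) -> Rl (a,b') -> b = b') /\
  (forall a a' b, Rl (a,b) -> Rl (a',b) -> a = a').
have [M [[PM1 PM2] Mmax]] : exists M, P M /\ forall N, M `<` N -> ~ P N.
  apply: Zorn_bigcup => F FP Ftot; split.
  - move=> a b b' [X FX Xab] [Y FY Yab'].
    have [XY|YX] := Ftot _ _ FX FY.
    + exact: (FP _ FY).1 _ _ _ (XY _ Xab) Yab'.
    + exact: (FP _ FX).1 _ _ _ Xab (YX _ Yab').
  - move=> a a' b [X FX Xab] [Y FY Yab'].
    have [XY|YX] := Ftot _ _ FX FY.
    + exact: (FP _ FY).2 _ _ _ (XY _ Xab) Yab'.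
    + exact: (FP _ FX).2 _ _ _ Xab (YX _ Yab').
exists M; split; [exact PM1|split; [exact PM2|]].
move=> a b Ha Hb.
apply: (Mmax (fun p => M p \/ p = (a,b))).
- split; first by move=> p Mp; left.
  by move=> /(_ (a,b) (or_intror erefl)) /Ha.
- split.
  + move=> x y y' H1 H2.
    destruct H1 as [Mxy|E1]; destruct H2 as [Mxy'|E2].
    * exact: PM1 Mxy Mxy'.
    * case: E2 => ??; subst; by move/Ha: Mxy.
    * case: E1 => ??; subst; by move/Ha: Mxy'.
    * congruence.
  + move=> x x' y H1 H2.
    destruct H1 as [Mxy|E1]; destruct H2 as [Mxy'|E2].
    * exact: PM2 Mxy Mxy'.
    * case: E2 => ??; subst; by move/Hb: Mxy.
    * case: E1 => ??; subst; by move/Hb: Mxy'.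
    * congruence.
Qed.
Close Scope classical_set_scope.
Open Scope R_scope.

Theorem theorem3p1 :
  forall (X : Type) (T : (X -> Prop) -> Prop),
    tychonoff T ->
    forall D : X -> Prop, closed_discrete T D ->
    forall L : Type, character_le (graph_open T) L ->
      exists h : {x : X | D x} -> L, forall a b, h a = h b -> a = b.
Proof.
intros X T Ht D HD L [_ Hbase].
destruct (Hbase (zeroC T (proj1 Ht))) as [B [HB1 HB2]].
destruct (maxpinj {x : X | D x} L) as [M [PM1 [PM2 Mmax]]].
destruct (Classical_Prop.classic (forall d, exists l, M (d, l))) as [Hall|Hn].
- destruct (ClassicalEpsilon.choice _ Hall) as [h Hh]. exists h.
  intros a b Hab. apply (PM2 a b (h a)); auto. rewrite Hab; auto.
- exfalso. apply not_all_ex_not in Hn. destruct Hn as [d0 Hd0].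
  destruct (Classical_Prop.classic (exists l0, forall a, ~ M (a, l0))) as [[l0 Hl0]|Hl].
  { apply (Mmax d0 l0); auto. intros b' Hb'. apply Hd0. exists b'; auto. }
  assert (Hp : forall l, exists a, M (a, l)).
  { intro l. apply NNPP. intro Hc. apply Hl. exists l. intros a Ha. apply Hc. exists a; auto. }
  destruct (ClassicalEpsilon.choice _ Hp) as [p Hpm].
  assert (Hf : forall l, exists f, B l f /\ proj1_sig f (proj1_sig (p l)) <> 0).
  { intro l. destruct (HB1 l) as [Ho Hz].
    exact (graph_bump T Ht (B l) Ho Hz (proj1_sig (p l))). }
  destruct (ClassicalEpsilon.choice _ Hf) as [fl Hfl].
  assert (Hg : forall x, exists r, 0 < r /\
     forall l, proj1_sig (p l) = x -> r = Rabs (proj1_sig (fl l) x)).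
  { intro x. destruct (Classical_Prop.classic (exists l, proj1_sig (p l) = x)) as [[l Hl1]|Hn].
    - exists (Rabs (proj1_sig (fl l) x)). split.
      + apply Rabs_pos_lt. rewrite <- Hl1. apply (Hfl l).
      + intros l' Hl'. assert (E : p l = p l').
        { destruct (p l) as [a Ha], (p l') as [a' Ha']. simpl in *. subst.
          f_equal. apply proof_irrelevance. }
        assert (l = l') by (apply (PM1 (p l)); [apply Hpm|rewrite E; apply Hpm]).
        subst; reflexivity.
    - exists 1. split. lra. intros l Hl1. exfalso. apply Hn. exists l; auto. }
  destruct (ClassicalEpsilon.choice _ Hg) as [g Hgp].
  destruct (HB2 _ (W_open T D HD g)) as [l Hl2].
  { intros x Dx. simpl. rewrite Rabs_R0. apply (Hgp x). }
  pose (x := proj1_sig (p l)).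
  assert (Hx : Rabs (proj1_sig (fl l) x) < g x).
  { apply (Hl2 _ (proj1 (Hfl l))). exact (proj2_sig (p l)). }
  rewrite <- (proj2 (Hgp x) l (Logic.eq_refl x)) in Hx. lra.
Qed.
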